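(* Suppose the network connectivity assumption and the Poincaré scaling assumption hold, and that for the given $H\in\mathcal H$ and $\ell\in\mathbb N$ the family $\{g_{T,\ell}:T\in\mathcal T_H\}$ satisfies the Riesz stability assumption with constant $C_{\mathrm r}(H,\ell)$. Then there exist constants $C,C'>0$, independent of $H$, $\ell$ and $f$ (depending only on $d,\alpha,\beta,\mu,C_{\mathrm{fr}}$, where $C_{\mathrm{fr}}$ is a constant with $|v|_M\le C_{\mathrm{fr}}|v|_L$ for all $v\in V$), such that for all $f\in\hat V$, with $u=\mathcal K^{-1}f$ and $u_{H,\ell}$ the SLOD approximation, $$|u-u_{H,\ell}|_L\le C\big(H|f-\Pi_Hf|_M+C_{\mathrm r}^{1/2}(H,\ell)\,\ell^{d/2}\,\sigma(H,\ell)\,|f|_M\big)\le C'\big(H^2|f|_L+C_{\mathrm r}^{1/2}(H,\ell)\,\ell^{d/2}\,\sigma(H,\ell)\,|f|_M\big).$$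
   Context: Let $d\in\mathbb N$, $\Omega=[0,1]^d$, and let $\mathcal G=(\mathcal N,\mathcal E)$ be a finite connected graph with at least two nodes, whose nodes $\mathcal N$ are distinct points of $\Omega$. Write $x\sim y$ if $\{x,y\}\in\mathcal E$, and $|x-y|$ for the Euclidean distance. For $\omega\subset\Omega$ let $\mathcal N(\omega)=\mathcal N\cap\omega$. Let $\Gamma\subset\partial\Omega$ with $\mathcal N(\Gamma)\neq\emptyset$. $\hat V$ is the space of real functions on $\mathcal N$ with $(u,v)=\sum_xu(x)v(x)$; $V=\{v\in\hat V:v=0\text{ on }\mathcal N(\Gamma)\}$; $\hat V_\omega,V_\omega$ are the functions in $\hat V$, resp. $V$, vanishing outside $\mathcal N(\omega)$; $\tilde V_\omega$ is the subspace of $V$ of functions vanishing at every node that is neither in $\mathcal N(\omega)$ nor adjacent to a node of $\mathcal N(\omega)$. Symmetric operators: $(M_xv,w)=\tfrac12\sum_{y\sim x}|x-y|v(x)w(x)$, $(L_xv,w)=\tfrac12\sum_{y\sim x}\frac{(v(x)-v(y))(w(x)-w(y))}{|x-y|}$, $(K_xv,w)=\tfrac12\sum_{y\sim x}\gamma_{xy}\frac{(v(x)-v(y))(w(x)-w(y))}{|x-y|}$ with $\gamma_{xy}=\gamma_{yx}\in[\alpha,\beta]$, $0<\alpha\le\beta<\infty$; $M,L,K$ are sums over all $x\in\mathcal N$, $M_\omega,L_\omega,K_\omega$ sums over $x\in\mathcal N(\omega)$. Seminorms $|v|_M^2=(Mv,v)$, $|v|_L^2=(Lv,v)$, $|v|_{M,\omega}^2=(M_\omega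 v,v)$, $|v|_{L,\omega}^2=(L_\omega v,v)$, $|v|_{V,\omega}^2=|v|_{M,\omega}^2+|v|_{L,\omega}^2$. $\mathcal K^{-1}:\hat V\to V$ maps $f$ to the unique $u\in V$ with $(Ku,v)=(Mf,v)$ $\forall v\in V$; $\mathcal K_\omega^{-1}:\hat V_\omega\to V_\omega$ maps $g$ to the unique $\varphi\in V_\omega$ with $(K_\omega\varphi,v)=(M_\omega g,v)$ $\forall v\in V_\omega$. Mesh: for $H>0$ with $1/H\in\mathbb N$, $\mathcal T_H$ consists of the cubes $I_1\times\dots\times I_d$, $I_i=[a_i,a_i+H)$, $a_i\in\{0,H,\dots,1-H\}$, except $I_i=[a_i,a_i+H]$ when $a_i+H=1$. $\mathsf N(\omega)$ is the union of all $T\in\mathcal T_H$ with $\overline T\cap\overline\omega\neq\emptyset$; $\mathsf N^1=\mathsf N$, $\mathsf N^\ell(\omega)=\mathsf N(\mathsf N^{\ell-1}(\omega))$. $\mathcal H$ is a finite set of admissible mesh sizes. $\mathbf 1_T$ is the indicator of nodes in $T$; $\mathbb P^0(\mathcal T_H)=\mathrm{span}\{\mathbf 1_T:T\in\mathcal T_H\}$; $\Pi_Hv=\sum_T\frac{(M_Tv,1)}{|1|_{M,T}^2}\mathbf 1_T$ (term $0$ if $T$ has no node). Network connectivity assumption: for every $H\in\mathcal H$, $T\in\mathcal T_H$ there is a connected subgraph of $\mathcal G$ containing all edges with at least one endpoint in $T$ and only edges with both endpoints in $\mathsf N(T)$. Poincaré scaling assumption: there is $\mu>0$ such that for all $H\in\mathcal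 H$, $T\in\mathcal T_H$, $v\in\hat V$ there is $c\in\mathbb R$ with $|v-c|_{M,T}\le\mu H|v|_{L,\mathsf N(T)}$. SLOD construction: fix $H\in\mathcal H$, $\ell\in\mathbb N$. For $T\in\mathcal T_H$ let $\omega=\mathsf N^\ell(T)$ and $\mathbb P^0(\mathcal T_{H,\omega})=\mathrm{span}\{\mathbf 1_{T'}:T'\in\mathcal T_H,\ T'\subset\omega\}$. For $q\in\mathbb P^0(\mathcal T_{H,\omega})$, let $\varphi_q=\mathcal K_\omega^{-1}q$, let $B_\omega\varphi_q$ be the functional $v\mapsto(K\varphi_q,v)-(Mq,v)$ on $\tilde V_\omega$, and let $\mathcal Rq\in\tilde V_\omega$ be the unique solution of $((L_\omega+M_\omega)\mathcal Rq,v)=(B_\omega\varphi_q,v)$ for all $v\in\tilde V_\omega$. Let $g_{T,\ell}$ be a minimizer of $q\mapsto|\mathcal Rq|_{V,\omega}^2/|q|_{M,\omega}^2$ over $q\in\mathbb P^0(\mathcal T_{H,\omega})$ with $|q|_{M,\omega}\ne 0$, normalized by $|g_{T,\ell}|_{M,\omega}=1$; set $\varphi_{T,\ell}=\mathcal K_\omega^{-1}g_{T,\ell}$, $\sigma_T(H,\ell)=|\mathcal Rg_{T,\ell}|_{V,\omega}$, and $\sigma(H,\ell)=\max_{T\in\mathcal T_H}\sigma_T(H,\ell)$. Let $V_{H,\ell}=\mathrm{span}\{\varphi_{T,\ell}:T\in\mathcal T_H\}$; the SLOD approximation $u_{H,\ell}\in V_{H,\ell}$ satisfies $(Ku_{H,\ell},v)=(Mf,v)$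 for all $v\in V_{H,\ell}$. Riesz stability assumption: there is $C_{\mathrm r}(H,\ell)>0$ such that for all real coefficients $(c_T)_{T\in\mathcal T_H}$, $C_{\mathrm r}^{-1}\sum_Tc_T^2\le|\sum_Tc_Tg_{T,\ell}|_M^2\le C_{\mathrm r}\sum_Tc_T^2$. *)

(* Defs.v *)
From HB Require Import structures.
From mathcomp Require Import all_boot all_order all_algebra.
From mathcomp Require Import boolp reals.
Set Implicit Arguments. Unset Strict Implicit. Unset Printing Implicit Defensive.
Import Order.TTheory GRing.Theory Num.Theory.
Local Open Scope ring_scope.

Section Defs.
Variable R : realType.
Variable d : nat.

Definition point := 'I_d -> R.
Definition dist (z w : point) : R := Num.sqrt (\sum_(i < d) (z i - w i) ^+ 2).
Definition inOmega (z : point) : bool := [forall i, (0 <= z i <= 1)].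
Definition onBoundary (z : point) : bool :=
  inOmega z && [exists i, (z i == 0) || (z i == 1)].

(* the network: nodes (a finite type) with positions, edges, Dirichlet part
   Gamma of the boundary, and edge coefficients gamma *)
Record network := Network {
  node : finType;
  pos : node -> point;
  adj : rel node;
  Gam : point -> Prop;
  gam : node -> node -> R }.

Variable G : network.
Local Notation N := (node G).
Local Notation p := (@pos G).
Local Notation adjG := (@adj G).

Definition wf_network (alpha beta : R) : Prop :=
  injective p /\ (forall x, inOmega (p x)) /\ (1 < #|N|)%N /\
  (forall x y, adjG x y = adjG y x) /\ (forall x, ~~ adjG x x) /\
  (forall x y, connect adjG x y) /\
  (forall z, @Gam G z -> onBoundary z) /\ (exists x, @Gam G (p x)) /\
  (forall x y, @gam G x y = @gam G y x) /\
  (forall x y, adjG x y -> alpha <= @gam G x y <= beta).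

Definition allN : N -> Prop := fun _ => True.

Definition Mform (S : N -> Prop) (v w : N -> R) : R :=
  \sum_(x | `[< S x >]) (2^-1 * \sum_(y | adjG x y) dist (p x) (p y) * v x * w x).
Definition Lform (S : N -> Prop) (v w : N -> R) : R :=
  \sum_(x | `[< S x >]) (2^-1 * \sum_(y | adjG x y)
      (v x - v y) * (w x - w y) / dist (p x) (p y)).
Definition Kform (S : N -> Prop) (v w : N -> R) : R :=
  \sum_(x | `[< S x >]) (2^-1 * \sum_(y | adjG x y)
      @gam G x y * (v x - v y) * (w x - w y) / dist (p x) (p y)).

Definition semiM (S : N -> Prop) (v : N -> R) : R := Num.sqrt (Mform S v v).
Definition semiL (S : N -> Prop) (v : N -> R) : R := Num.sqrt (Lform S v v).
Definition semiV (S : N -> Prop) (v : N -> R) : R :=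
  Num.sqrt (Mform S v v + Lform S v v).

Definition inV (v : N -> R) : Prop := forall x, @Gam G (p x) -> v x = 0.
Definition inVom (S : N -> Prop) (v : N -> R) : Prop :=
  inV v /\ forall x, ~ S x -> v x = 0.
Definition inVtilde (S : N -> Prop) (v : N -> R) : Prop :=
  inV v /\ forall x, ~ S x -> (forall y, adjG x y -> ~ S y) -> v x = 0.

(* u = K^{-1} f  and  phi = K_omega^{-1} g (defining properties) *)
Definition isKinv (f u : N -> R) : Prop :=
  inV u /\ forall v, inV v -> Kform allN u v = Mform allN f v.
Definition isKinvOm (S : N -> Prop) (g phi : N -> R) : Prop :=
  inVom S phi /\ forall v, inVom S v -> Kform S phi v = Mform S g v.

(* Mesh T_H with H = 1/n: cubes indexed by multi-indices a in {0..n-1}^d *)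
Definition idx (n : nat) := {ffun 'I_d -> 'I_n}.

Definition inCube (n : nat) (a : idx n) (z : point) : bool :=
  [forall i, ((a i)%:R / n%:R <= z i) &&
     (if ((a i).+1 == n)%N then z i <= (a i).+1%:R / n%:R
      else z i < (a i).+1%:R / n%:R)].
Definition closedCube (n : nat) (a : idx n) (z : point) : bool :=
  [forall i, (a i)%:R / n%:R <= z i <= (a i).+1%:R / n%:R].

(* a region that is a union of cubes is given by a set of indices *)
Definition Nb (n : nat) (P : idx n -> Prop) : idx n -> Prop :=
  fun b => exists a, P a /\ exists z, closedCube a z /\ closedCube b z.
Definition Nl (n : nat) (k : nat) (P : idx n -> Prop) : idx n -> Prop :=
  iter k (@Nb n) P.
Definition cube1 (n : nat) (a : idx n) : idx n -> Prop := fun b => b = a.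
Definition patch (n l : nat) (a : idx n) : idx n -> Prop := Nl l (cube1 a).

Definition nodesIn (n : nat) (P : idx n -> Prop) : N -> Prop :=
  fun x => exists b, P b /\ inCube b (p x).

Definition ind (n : nat) (a : idx n) : N -> R := fun x => (inCube a (p x))%:R.

Definition inP0 (n : nat) (P : idx n -> Prop) (q : N -> R) : Prop :=
  exists c : idx n -> R, forall x, q x = \sum_(b | `[< P b >]) c b * ind b x.

Definition isRq (S : N -> Prop) (q r : N -> R) : Prop :=
  exists phi, isKinvOm S q phi /\ inVtilde S r /\
    forall v, inVtilde S v ->
      Lform S r v + Mform S r v = Kform allN phi v - Mform allN q v.

Definition isSLODbasis (n l : nat) (a : idx n) (g phi r : N -> R) : Prop :=
  let S := nodesIn (patch l a) in
  inP0 (patch l a) g /\ semiM S g = 1 /\ isKinvOm S g phi /\ isRq S g r /\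
      forall q rq, inP0 (patch l a) q -> semiM S q <> 0 -> isRq S q rq ->
        semiV S r ^+ 2 / semiM S g ^+ 2 <= semiV S rq ^+ 2 / semiM S q ^+ 2.

Definition sigma (n l : nat) (r : idx n -> N -> R) : R :=
  \big[Num.max/0]_(a : idx n) semiV (nodesIn (patch l a)) (r a).

Definition inSpan (n : nat) (phi : idx n -> N -> R) (u : N -> R) : Prop :=
  exists c : idx n -> R, forall x, u x = \sum_(a : idx n) c a * phi a x.
Definition isSLOD (n : nat) (phi : idx n -> N -> R) (f uH : N -> R) : Prop :=
  inSpan phi uH /\ forall v, inSpan phi v -> Kform allN uH v = Mform allN f v.

Definition riesz (n : nat) (g : idx n -> N -> R) (Cr : R) : Prop :=
  forall c : idx n -> R,
    Cr^-1 * (\sum_a c a ^+ 2) <= semiM allN (fun x => \sum_a c a * g a x) ^+ 2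
    <= Cr * (\sum_a c a ^+ 2).

(* L^2 projection Pi_H onto piecewise constants (term 0 if |1|_{M,T} = 0,
   which in MathComp is automatic since 0^-1 = 0; made explicit here) *)
Definition PiH (n : nat) (f : N -> R) : N -> R := fun x =>
  \sum_(a : idx n)
    (if Mform (fun y => inCube a (p y)) (fun _ => 1) (fun _ => 1) == 0 then 0
     else Mform (fun y => inCube a (p y)) f (fun _ => 1)
          / Mform (fun y => inCube a (p y)) (fun _ => 1) (fun _ => 1)) * ind a x.

Definition netConn (n : nat) : Prop :=
  forall a : idx n, exists (Vs : pred N) (E : rel N),
    (forall x y, E x y -> adjG x y) /\ (forall x y, E x y -> E y x) /\
    (forall x y, E x y -> Vs x && Vs y) /\
    (forall x y, adjG x y -> inCube a (p x) || inCube a (p y) -> E x y) /\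
    (forall x y, E x y -> nodesIn (Nb (cube1 a)) x /\ nodesIn (Nb (cube1 a)) y) /\
    (forall x y, Vs x -> Vs y -> connect E x y).

Definition poincare (mu : R) (n : nat) : Prop :=
  forall (a : idx n) (v : N -> R), exists c : R,
    semiM (fun x => inCube a (p x)) (fun x => v x - c)
      <= mu * n%:R^-1 * semiL (nodesIn (Nb (cube1 a))) v.

End Defs.

(* Main.v *)
Require Import Defs.
From HB Require Import structures.
From mathcomp Require Import all_boot all_order all_algebra.
From mathcomp Require Import boolp reals.
From mathcomp Require Import ring lra zify.
Import Order.TTheory GRing.Theory Num.Theory.
Local Open Scope ring_scope.
Set Implicit Arguments. Unset Strict Implicit. Unset Printing Implicit Defensive.

Section CS.
Variable R : realType.

Lemma sq_ge0 (x : R) : 0 <= x * x.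
Proof. by rewrite -expr2 sqr_ge0. Qed.

Lemma CS_sum (I : finType) (P : pred I) (w a b : I -> R) :
  (forall i, P i -> 0 <= w i) ->
  (\sum_(i | P i) w i * (a i * b i)) ^+ 2 <=
  (\sum_(i | P i) w i * (a i * a i)) * (\sum_(i | P i) w i * (b i * b i)).
Proof.
move=> w0.
set A := \sum_(i | P i) _ * (a i * a i).
set B := \sum_(i | P i) _ * (b i * b i).
set C := \sum_(i | P i) _ * (a i * b i).
have E : \sum_(i | P i) \sum_(j | P j) w i * w j * (a i * b j - a j * b i) ^+ 2
   = 2 * (A * B - C ^+ 2).
  have -> : 2 * (A * B - C ^+ 2) = A * B + B * A - C * C - C * C.
    rewrite expr2; ring.
  rewrite /A /B /C !big_distrlr /= -big_split -!sumrB /=.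
  apply: eq_bigr => i _; rewrite -big_split -!sumrB /=.
  apply: eq_bigr => j _; ring.
have : 0 <= \sum_(i | P i) \sum_(j | P j) w i * w j * (a i * b j - a j * b i) ^+ 2.
  apply: sumr_ge0 => i Pi; apply: sumr_ge0 => j Pj.
  by rewrite mulr_ge0 ?sqr_ge0 // mulr_ge0 // w0.
rewrite E pmulr_rge0 // subr_ge0 //.
Qed.

Lemma CS_sqrt (x a b : R) : 0 <= a -> 0 <= b -> x ^+ 2 <= a * b ->
  `|x| <= Num.sqrt a * Num.sqrt b.
Proof.
move=> a0 b0 h; rewrite -sqrtrM // -sqrtr_sqr; exact: ler_wsqrtr.
Qed.

Lemma CS_sum_sqrt (I : finType) (P : pred I) (w a b : I -> R) :
  (forall i, P i -> 0 <= w i) ->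
  `|\sum_(i | P i) w i * (a i * b i)| <=
  Num.sqrt (\sum_(i | P i) w i * (a i * a i)) * Num.sqrt (\sum_(i | P i) w i * (b i * b i)).
Proof.
move=> w0; apply: CS_sqrt; last exact: CS_sum.
  by apply: sumr_ge0 => i Pi; rewrite mulr_ge0 ?w0 // -expr2 sqr_ge0.
by apply: sumr_ge0 => i Pi; rewrite mulr_ge0 ?w0 // -expr2 sqr_ge0.
Qed.

End CS.

Section Gen.
Variable R : realType.
Variable N : finType.

Definition Dd (s : R) (v : N -> R) (i : N * N) := v i.1 - s * v i.2.
Definition Gen (P : pred (N * N)) (wt : N * N -> R) (s : R) (v w : N -> R) :=
  \sum_(i | P i) wt i * (Dd s v i * Dd s w i).

Variables (P : pred (N * N)) (wt : N * N -> R) (s : R).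

Lemma Gen_sym v w : Gen P wt s v w = Gen P wt s w v.
Proof. by apply: eq_bigr => i _; rewrite mulrC [Dd s w i * _]mulrC mulrC. Qed.

Lemma Gen_lin (a b : R) v1 v2 w :
  Gen P wt s (fun x => a * v1 x + b * v2 x) w = a * Gen P wt s v1 w + b * Gen P wt s v2 w.
Proof.
rewrite /Gen !mulr_sumr -big_split /=; apply: eq_bigr => i _; rewrite /Dd /=; ring.
Qed.

Lemma Gen_sub v1 v2 w :
  Gen P wt s (fun x => v1 x - v2 x) w = Gen P wt s v1 w - Gen P wt s v2 w.
Proof.
have -> : (fun x => v1 x - v2 x) = (fun x => 1 * v1 x + (-1) * v2 x).
  by apply/funext => x; ring.
by rewrite Gen_lin; ring.
Qed.

Lemma Gen_add v1 v2 w :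
  Gen P wt s (fun x => v1 x + v2 x) w = Gen P wt s v1 w + Gen P wt s v2 w.
Proof.
have -> : (fun x => v1 x + v2 x) = (fun x => 1 * v1 x + 1 * v2 x).
  by apply/funext => x; ring.
by rewrite Gen_lin; ring.
Qed.

Lemma Gen_sum (I : finType) (c : I -> R) (phi : I -> N -> R) w :
  Gen P wt s (fun x => \sum_a c a * phi a x) w = \sum_a c a * Gen P wt s (phi a) w.
Proof.
rewrite /Gen; under [RHS]eq_bigr do rewrite mulr_sumr.
rewrite exchange_big /=; apply: eq_bigr => i _.
rewrite /Dd /= mulr_sumr -sumrB mulr_suml mulr_sumr.
by apply: eq_bigr => a _; ring.
Qed.

Hypothesis wt0 : forall i, P i -> 0 <= wt i.

Lemma Gen_ge0 v : 0 <= Gen P wt s v v.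
Proof. by apply: sumr_ge0 => i Pi; apply: mulr_ge0; [exact: wt0 | exact: sq_ge0]. Qed.

Lemma Gen_CS v w :
  `|Gen P wt s v w| <= Num.sqrt (Gen P wt s v v) * Num.sqrt (Gen P wt s w w).
Proof. exact: (@CS_sum_sqrt R _ P wt (Dd s v) (Dd s w) wt0). Qed.

Lemma Gen_CS' v w :
  Gen P wt s v w <= Num.sqrt (Gen P wt s v v) * Num.sqrt (Gen P wt s w w).
Proof. exact: le_trans (ler_norm _) (Gen_CS v w). Qed.

End Gen.

Section GenMore.
Variable R : realType.
Variable N : finType.

Lemma Gen_ext (P : pred (N * N)) wt (s : R) v w w' :
  (forall i, P i -> Dd s v i != 0 -> Dd s w i = Dd s w' i) ->
  Gen P wt s v w = Gen P wt s v w'.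
Proof.
move=> h; apply: eq_bigr => i Pi.
have [->|nz] := eqVneq (Dd s v i) 0; first by rewrite !mul0r mulr0.
by rewrite h.
Qed.


Lemma Gen_eq0 (P : pred (N * N)) wt (s : R) v :
  (forall i, P i -> 0 < wt i) -> Gen P wt s v v = 0 -> forall i, P i -> Dd s v i = 0.
Proof.
move=> wt0 h0 i Pi.
have h : forall j, P j -> wt j * (Dd s v j * Dd s v j) = 0.
  apply: psumr_eq0P h0 => j Pj.
  by apply: mulr_ge0; [exact: ltW (wt0 _ Pj)| exact: sq_ge0].
have /eqP := h i Pi.
by rewrite mulf_eq0 -expr2 sqrf_eq0 (gt_eqF (wt0 _ Pi)) /= => /eqP.
Qed.

Lemma Gen_mono (P : pred (N * N)) wt wt' (s k : R) v :
  (forall i, P i -> k * wt i <= wt' i) ->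
  k * Gen P wt s v v <= Gen P wt' s v v.
Proof.
move=> h; rewrite /Gen mulr_sumr; apply: ler_sum => i Pi.
by rewrite mulrA; apply: ler_wpM2r; [exact: sq_ge0 | exact: h].
Qed.

Lemma sum_count (A : finType) (Q : A -> pred (N * N)) (F : N * N -> R) :
  \sum_(a : A) \sum_(i | Q a i) F i = \sum_i #|[pred a | Q a i]|%:R * F i.
Proof.
under eq_bigr do rewrite big_mkcond.
rewrite exchange_big /=; apply: eq_bigr => i _.
rewrite -big_mkcond /= sumr_const mulr_natl.
by congr (_ *+ _); apply: eq_card.
Qed.

Lemma Gen_overlap (A : finType) (Q : A -> pred (N * N)) (P : pred (N * N)) wt (s K : R) v :
  (forall i, P i -> 0 <= wt i) ->
  (forall a i, Q a i -> P i) ->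
  (forall i, P i -> #|[pred a | Q a i]|%:R <= K) ->
  \sum_a Gen (Q a) wt s v v <= K * Gen P wt s v v.
Proof.
move=> wt0 QP hK; rewrite /Gen sum_count mulr_sumr.
rewrite (bigID P) /= [X in _ + X]big1 ?addr0; last first.
  move=> i nPi; suff -> : #|[pred a | Q a i]| = 0%N by rewrite mul0r.
  apply: eq_card0 => a /=; apply/negP => /QP; by rewrite (negbTE nPi).
apply: ler_sum => i Pi; rewrite mulrA [X in _ <= X]mulrA; apply: ler_wpM2r; first exact: sq_ge0.
by apply: ler_wpM2r; [exact: wt0 | exact: hK].
Qed.

Lemma Gen_partition (A : finType) (Q : A -> pred (N * N)) (P : pred (N * N)) wt (s : R) v w :
  (forall a i, Q a i -> P i) ->
  (forall i, P i -> #|[pred a | Q a i]| = 1%N) ->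
  \sum_a Gen (Q a) wt s v w = Gen P wt s v w.
Proof.
move=> QP h1; rewrite /Gen sum_count.
rewrite (bigID P) /= [X in _ + X]big1 ?addr0; last first.
  move=> i nPi; suff -> : #|[pred a | Q a i]| = 0%N by rewrite mul0r.
  apply: eq_card0 => a /=; apply/negP => /QP; by rewrite (negbTE nPi).
by apply: eq_bigr => i Pi; rewrite h1 // mul1r.
Qed.

End GenMore.

Section Forms.
Variable R : realType.
Variable d : nat.
Variable G : network R d.
Local Notation N := (node G).
Local Notation p := (@pos R d G).

Definition PS (S : N -> Prop) : pred (N * N) := fun i => `[< S i.1 >] && @adj _ _ G i.1 i.2.
Definition wM (i : N * N) : R := 2^-1 * dist (p i.1) (p i.2).
Definition wL (i : N * N) : R := 2^-1 / dist (p i.1) (p i.2).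
Definition wK (i : N * N) : R := 2^-1 * @gam _ _ G i.1 i.2 / dist (p i.1) (p i.2).

Lemma MformE S v w : Mform S v w = Gen (PS S) wM 0 v w.
Proof.
rewrite /Mform; under eq_bigr do rewrite mulr_sumr.
rewrite pair_big_dep; apply: eq_bigr => i _; rewrite /wM /Dd; ring.
Qed.

Lemma LformE S v w : Lform S v w = Gen (PS S) wL 1 v w.
Proof.
rewrite /Lform; under eq_bigr do rewrite mulr_sumr.
rewrite pair_big_dep; apply: eq_bigr => i _; rewrite /wL /Dd; ring.
Qed.

Lemma KformE S v w : Kform S v w = Gen (PS S) wK 1 v w.
Proof.
rewrite /Kform; under eq_bigr do rewrite mulr_sumr.
rewrite pair_big_dep; apply: eq_bigr => i _; rewrite /wK /Dd; ring.
Qed.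

Lemma dist_ge0 (z w : point R d) : 0 <= dist z w.
Proof. exact: sqrtr_ge0. Qed.

Lemma wM_ge0 i : 0 <= wM i.
Proof. by rewrite /wM mulr_ge0 ?invr_ge0 ?ler0n ?dist_ge0. Qed.
Lemma wL_ge0 i : 0 <= wL i.
Proof. by rewrite /wL mulr_ge0 ?invr_ge0 ?ler0n ?dist_ge0. Qed.

Variables alpha beta : R.
Hypothesis wf : wf_network G alpha beta.

Lemma adj_sym x y : @adj _ _ G x y = @adj _ _ G y x.
Proof. by case: wf => _ [_ [_ [h _]]]; apply: h. Qed.

Lemma gam_bd x y : @adj _ _ G x y -> alpha <= @gam _ _ G x y <= beta.
Proof. by case: wf => _ [_ [_ [_ [_ [_ [_ [_ [_ h]]]]]]]]; apply: h. Qed.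

Lemma wK_lo i : @adj _ _ G i.1 i.2 -> alpha * wL i <= wK i.
Proof.
move=> a; have /andP [h _] := gam_bd a.
rewrite -subr_ge0.
have -> : wK i - alpha * wL i =
  2^-1 * (@gam _ _ G i.1 i.2 - alpha) * (dist (p i.1) (p i.2))^-1 by rewrite /wK /wL; ring.
by rewrite !mulr_ge0 ?invr_ge0 ?ler0n ?dist_ge0 ?subr_ge0.
Qed.

Lemma wK_hi i : @adj _ _ G i.1 i.2 -> wK i <= beta * wL i.
Proof.
move=> a; have /andP [_ h] := gam_bd a.
rewrite -subr_ge0.
have -> : beta * wL i - wK i =
  2^-1 * (beta - @gam _ _ G i.1 i.2) * (dist (p i.1) (p i.2))^-1 by rewrite /wK /wL; ring.
by rewrite !mulr_ge0 ?invr_ge0 ?ler0n ?dist_ge0 ?subr_ge0.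
Qed.

End Forms.

Section Cubes.
Variable R : realType.
Variable d : nat.
Variable n : nat.
Hypothesis n0 : (0 < n)%N.

Lemma ndiv_le (a b : nat) : (a%:R / n%:R <= b%:R / n%:R :> R) = (a <= b)%N.
Proof. by rewrite ler_pM2r ?invr_gt0 ?ltr0n // ler_nat. Qed.
Lemma ndiv_lt (a b : nat) : (a%:R / n%:R < b%:R / n%:R :> R) = (a < b)%N.
Proof. by rewrite ltr_pM2r ?invr_gt0 ?ltr0n // ltr_nat. Qed.

Lemma cube_unique (a b : idx d n) (z : point R d) :
  inCube a z -> inCube b z -> a = b.
Proof.
have key : forall (a b : idx d n) i, inCube a z -> inCube b z -> (a i <= b i)%N.
  move=> a' b' i /forallP /(_ i) /andP [ha1 ha2] /forallP /(_ i) /andP [hb1 hb2].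
  rewrite leqNgt; apply/negP => lt.
  have ne : ((b' i).+1 == n) = false.
    by apply/negbTE; rewrite neq_ltn (leq_trans _ (ltn_ord (a' i))) //.
  rewrite ne in hb2.
  have : z i < z i.
    apply: (lt_le_trans hb2); apply: le_trans ha1; by rewrite ndiv_le.
  by rewrite ltxx.
move=> ha hb; apply/ffunP => i; apply/val_inj/anti_leq.
by rewrite key // key.
Qed.

Lemma cube_exists (z : point R d) : inOmega z -> exists a : idx d n, inCube a z.
Proof.
move=> /forallP hz.
case: n n0 => // n' _.
have hk : forall i, exists k : 'I_n'.+1, (k%:R / n'.+1%:R <= z i) &&
   (if (k.+1 == n'.+1)%N then z i <= k.+1%:R / n'.+1%:R else z i < k.+1%:R / n'.+1%:R).
  move=> i; have /andP [z0 z1] := hz i.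
  have P0 : (fun k : 'I_n'.+1 => (k%:R / n'.+1%:R <= z i)) ord0 by rewrite /= mul0r.
  case: (@arg_maxnP _ ord0 (fun k : 'I_n'.+1 => (k%:R / n'.+1%:R <= z i)) val P0) => k hk hmax.
  exists k; rewrite hk /=.
  case: ifP => [/eqP -> | ne].
    by rewrite divff ?pnatr_eq0.
  rewrite ltNge; apply/negP => hle.
  have lt : (k.+1 < n'.+1)%N.
    by rewrite ltn_neqAle ne ltn_ord.
  have := hmax (Ordinal lt) hle; rewrite /= ltnn //.
have [f hf] := boolp.choice hk.
exists [ffun i => f i]; apply/forallP => i; rewrite ffunE; exact: hf.
Qed.

Lemma closed_near (a b : idx d n) (z : point R d) i :
  closedCube a z -> closedCube b z -> (a i <= (b i).+1)%N /\ (b i <= (a i).+1)%N.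
Proof.
move=> /forallP /(_ i) /andP [a1 a2] /forallP /(_ i) /andP [b1 b2].
by split; rewrite -ndiv_le; apply: le_trans; eassumption.
Qed.

Lemma Nl_near k (a b : idx d n) :
  Nl R k (cube1 a) b -> forall i, (a i <= b i + k)%N /\ (b i <= a i + k)%N.
Proof.
elim: k b => [|k IH] b.
  by rewrite /Nl /= /cube1 => -> i; rewrite addn0.
rewrite /Nl iterS => -[a' [ha' [z [c1 c2]]]] i.
have [h1 h2] := IH _ ha' i.
have [h3 h4] := closed_near i c1 c2.
split; lia.
Qed.

Lemma card_near k (b : idx d n) :
  (#|[pred a : idx d n | [forall i, (a i <= b i + k)%N && (b i <= a i + k)%N]]| <= (2 * k).+1 ^ d)%N.
Proof.
pose h (a : idx d n) : {ffun 'I_d -> 'I_(2 * k).+1} := [ffun i => inord (a i + k - b i)].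
have := @leq_card_in _ _ h [pred a : idx d n | [forall i, (a i <= b i + k)%N && (b i <= a i + k)%N]].
rewrite card_ffun !card_ord; apply.
move=> a1 a2; rewrite !inE => /forallP h1 /forallP h2 /ffunP he.
apply/ffunP => i; apply/val_inj.
have := he i; rewrite !ffunE => /(congr1 val).
have /andP [x1 x2] := h1 i; have /andP [y1 y2] := h2 i.
rewrite /= !inordK; try lia.
Qed.

End Cubes.

Section Proj.
Variable R : realType.
Variable d : nat.
Variable G : network R d.
Local Notation N := (node G).
Local Notation p := (@pos R d G).
Variables alpha beta : R.
Hypothesis wf : wf_network G alpha beta.
Variable n : nat.
Hypothesis n0 : (0 < n)%N.

Local Notation M S := (Gen (PS S) (@wM R d G) 0).
Local Notation L S := (Gen (PS S) (@wL R d G) 1).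

Definition Sc (a : idx d n) : N -> Prop := fun x => inCube a (p x).

Lemma inOm x : inOmega (p x).
Proof. by case: wf => _ [h _]. Qed.

Definition cb (x : N) : idx d n := xchoose (cube_exists n0 (inOm x)).

Lemma cbP x : inCube (cb x) (p x).
Proof. exact: (xchooseP (cube_exists n0 (inOm x))). Qed.

Lemma cbE a x : inCube a (p x) = (a == cb x).
Proof.
apply/idP/eqP => [h|->]; last exact: cbP.
exact: (cube_unique n0 h (cbP x)).
Qed.

Lemma indE a x : ind a x = (a == cb x)%:R.
Proof. by rewrite /ind cbE. Qed.

Definition Mc (a : idx d n) := Mform (fun y : N => inCube a (p y)).
Definition pic (h : N -> R) a : R :=
  if Mc a (fun _ => 1) (fun _ => 1) == 0 then 0
  else Mc a h (fun _ => 1) / Mc a (fun _ => 1) (fun _ => 1).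

Lemma sum_ind (c : idx d n -> R) x : \sum_a c a * ind a x = c (cb x).
Proof.
rewrite (bigD1 (cb x)) //= big1 ?addr0; first by rewrite indE eqxx mulr1.
by move=> a /negbTE; rewrite indE => ->; rewrite mulr0.
Qed.

Lemma PiHE h x : PiH n h x = pic h (cb x).
Proof. by rewrite /PiH sum_ind. Qed.

Lemma McE a v w : Mc a v w = M (Sc a) v w.
Proof. exact: MformE. Qed.

Lemma wM0 : forall i : N * N, (fun _ => true) i -> 0 <= @wM R d G i.
Proof. by move=> i _; exact: wM_ge0. Qed.

Lemma core a h : M (Sc a) (fun x => h x - pic h a) (fun _ => 1) = 0.
Proof.
have -> : (fun x => h x - pic h a) = (fun x => 1 * h x + (- pic h a) * 1).
  by apply/funext => x; ring.
rewrite Gen_lin mul1r -!McE /pic.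
case: ifP => [/eqP e | /negbT ne].
  rewrite e mulr0 addr0.
  have := Gen_CS (P := PS (Sc a)) (wt := @wM R d G) 0 (fun i _ => wM_ge0 i) h (fun _ => 1).
  rewrite -!McE e sqrtr0 mulr0 normr_le0 => /eqP //.
by rewrite mulNr divfK // subrr.
Qed.


Lemma Gen_restrict (Sb : N -> bool) (wt : N * N -> R) v w :
  Gen (PS (@allN R d G)) wt 0 (fun x => (Sb x)%:R * v x) w = Gen (PS (fun x => Sb x)) wt 0 v w.
Proof.
rewrite /Gen [LHS]big_mkcond [RHS]big_mkcond; apply: eq_bigr => i _.
rewrite /PS asboolT // asboolb /Dd /=.
by case: (Sb i.1); case: (adj _ _); rewrite //=; ring.
Qed.

Lemma Gen_add2 (P : pred (N * N)) (wt : N * N -> R) s v w1 w2 :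
  Gen P wt s v (fun x => w1 x + w2 x) = Gen P wt s v w1 + Gen P wt s v w2.
Proof. by rewrite Gen_sym Gen_add Gen_sym [X in _ + X]Gen_sym. Qed.

Lemma PiH_on a h i : PS (Sc a) i -> PiH n h i.1 = pic h a.
Proof.
by rewrite /PS /Sc asboolb => /andP [c _]; rewrite PiHE; move: c; rewrite cbE => /eqP ->.
Qed.

Lemma orthoPi h w :
  M (@allN R d G) (fun x => h x - PiH n h x) (PiH n w) = 0.
Proof.
rewrite Gen_sym.
have -> : PiH n w = fun x => \sum_a pic w a * ind a x by [].
rewrite Gen_sum big1 // => a _.
have -> : ind a = fun x => (inCube a (p x))%:R * 1.
  by apply/funext => x; rewrite mulr1.
rewrite (Gen_restrict (fun x => inCube a (p x))).
rewrite (@Gen_ext _ _ _ _ _ _ _ (fun x => h x - pic h a)) ?mulr0 //; first by rewrite Gen_sym core mulr0.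
move=> i hi _; rewrite /Dd !mul0r !subr0 (PiH_on h hi) //.
Qed.

Lemma pyth h :
  M (@allN R d G) h h = M (@allN R d G) (fun x => h x - PiH n h x) (fun x => h x - PiH n h x)
    + M (@allN R d G) (PiH n h) (PiH n h).
Proof.
set a := (fun x => h x - PiH n h x); set b := PiH n h.
have e : h = fun x => a x + b x by apply/funext => x; rewrite /a /b; ring.
have o1 : M (@allN R d G) a b = 0 by exact: orthoPi.
have o2 : M (@allN R d G) b a = 0 by rewrite Gen_sym.
by rewrite [in LHS]e Gen_add (Gen_add2 _ _ _ a a b) (Gen_add2 _ _ _ b a b) o1 o2 addr0 add0r.
Qed.

Lemma Gen_scale2 (P : pred (N * N)) (wt : N * N -> R) s v (k : R) w :
  Gen P wt s v (fun x => k * w x) = k * Gen P wt s v w.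
Proof.
have -> : (fun x => k * w x) = (fun x => k * w x + 0 * w x) by apply/funext => x; ring.
by rewrite Gen_sym Gen_lin Gen_sym; ring.
Qed.

Lemma best a h c :
  M (Sc a) (fun x => h x - pic h a) (fun x => h x - pic h a)
  <= M (Sc a) (fun x => h x - c) (fun x => h x - c).
Proof.
set e := (fun x => h x - pic h a).
set k1 := (fun x : N => (pic h a - c) * (fun _ : N => 1) x).
have E : (fun x => h x - c) = (fun x => e x + k1 x) by apply/funext => x; rewrite /e /k1; ring.
have o1 : M (Sc a) e k1 = 0 by rewrite /k1 Gen_scale2 core mulr0.
have o2 : M (Sc a) k1 e = 0 by rewrite Gen_sym.
rewrite E Gen_add (Gen_add2 _ _ _ e e k1) (Gen_add2 _ _ _ k1 e k1) o1 o2 addr0 add0r.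
by rewrite lerDl; apply: Gen_ge0 => i _; exact: wM_ge0.
Qed.

Lemma Gen_ext2 (P : pred (N * N)) (wt : N * N -> R) s v v' :
  (forall i, P i -> Dd s v i = Dd s v' i) -> Gen P wt s v v = Gen P wt s v' v'.
Proof.
move=> h; rewrite (@Gen_ext _ _ _ _ _ _ _ v'); last by move=> i Pi _; rewrite h.
rewrite Gen_sym (@Gen_ext _ _ _ _ _ _ _ v') //; by move=> i Pi _; rewrite h.
Qed.

Lemma Mpart h :
  M (@allN R d G) (fun x => h x - PiH n h x) (fun x => h x - PiH n h x)
  = \sum_a M (Sc a) (fun x => h x - pic h a) (fun x => h x - pic h a).
Proof.
rewrite -(@Gen_partition _ _ _ (fun a => PS (Sc a)) (PS (@allN R d G))).
- apply: eq_bigr => a _; apply: Gen_ext2 => i hi.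
  by rewrite /Dd !mul0r !subr0 (PiH_on h hi).
- by move=> a i; rewrite /PS !asboolb asboolT // => /andP [_ ->].
move=> i; rewrite /PS asboolT //= => ai.
apply: (@eq_card1 _ (cb i.1)) => a; rewrite !inE /Sc asboolb cbE ai andbT //.
Qed.

Lemma nodes_near k (a : idx d n) x :
  nodesIn (G := G) (Nl R k (cube1 a)) x ->
  [forall i, ((a i <= cb x i + k) && (cb x i <= a i + k))%N].
Proof.
move=> [b [hb hx]]; move: hx; rewrite cbE => /eqP e; subst b.
apply/forallP => i; have [h1 h2] := Nl_near n0 hb i; by rewrite h1 h2.
Qed.

Lemma count_near (k : nat) (Sa : idx d n -> N -> Prop) :
  (forall a x, Sa a x -> nodesIn (G := G) (Nl R k (cube1 a)) x) ->
  forall i : N * N, (#|[pred a : idx d n | PS (Sa a) i]|%:R <= (((2 * k).+1 ^ d)%N%:R : R)).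
Proof.
move=> hS i; rewrite ler_nat; apply: (leq_trans _ (card_near n0 k (cb i.1))).
apply: subset_leq_card; apply/subsetP => a; rewrite !inE /PS => /andP [/asboolP h _].
exact: nodes_near (hS _ _ h).
Qed.

Lemma sqrt_sq_le (X Y k : R) : 0 <= X -> 0 <= Y -> 0 <= k ->
  Num.sqrt X <= k * Num.sqrt Y -> X <= k ^+ 2 * Y.
Proof.
move=> X0 Y0 k0 h.
rewrite -(sqr_sqrtr X0) -[Y](sqr_sqrtr Y0) -exprMn expr2 [X in _ <= X]expr2.
by apply: ler_pM; rewrite ?sqrtr_ge0.
Qed.

Variable mu : R.
Hypothesis mu0 : 0 < mu.

Lemma Mpoinc h : poincare G mu n ->
  M (@allN R d G) (fun x => h x - PiH n h x) (fun x => h x - PiH n h x)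
  <= (mu / n%:R) ^+ 2 * (((3 ^ d)%N%:R : R) * L (@allN R d G) h h).
Proof.
move=> hp; rewrite Mpart.
apply: le_trans (_ : \sum_a (mu / n%:R) ^+ 2 * L (nodesIn (G := G) (Nb R (cube1 a))) h h <= _).
  apply: ler_sum => a _.
  have [c hc] := hp a h.
  apply: le_trans (best a h c) _.
  apply: sqrt_sq_le.
  - by apply: Gen_ge0 => i _; exact: wM_ge0.
  - by apply: Gen_ge0 => i _; exact: wL_ge0.
  - by rewrite divr_ge0 ?ler0n // ltW.
  by move: hc; rewrite /semiM /semiL MformE LformE.
rewrite -mulr_sumr ler_wpM2l ?sqr_ge0 //.
apply: Gen_overlap.
- by move=> i _; exact: wL_ge0.
- by move=> a i; rewrite /PS => /andP [_ ->]; rewrite andbT; apply/asboolP.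
move=> i _; apply: (@count_near 1 (fun a => nodesIn (G := G) (Nb R (cube1 a)))) => a x hx; exact: hx.
Qed.

End Proj.

Section Local.
Variable R : realType.
Variable d : nat.
Variable G : network R d.
Local Notation N := (node G).
Local Notation p := (@pos R d G).
Variables alpha beta : R.
Hypothesis wf : wf_network G alpha beta.
Hypothesis alpha0 : 0 < alpha.

Local Notation M S := (Gen (PS S) (@wM R d G) 0).
Local Notation L S := (Gen (PS S) (@wL R d G) 1).
Local Notation K S := (Gen (PS S) (@wK R d G) 1).
Local Notation allN := (@allN R d G).

Lemma dist_gt0 x y : @adj _ _ G x y -> 0 < dist (p x) (p y).
Proof.
move=> axy; rewrite lt_def dist_ge0 andbT; apply/negP => /eqP h0.
have hs : \sum_(i < d) (p x i - p y i) ^+ 2 = 0.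
  apply/eqP; rewrite eq_le sumr_ge0 ?andbT; last by move=> i _; exact: sqr_ge0.
  by rewrite -sqrtr_eq0; apply/eqP.
have e : p x = p y.
  apply/funext => i; apply/eqP; rewrite -subr_eq0 -sqrf_eq0; apply/eqP.
  by apply: (psumr_eq0P (P := predT) _ hs) => // j _; exact: sqr_ge0.
case: wf => inj [_ [_ [_ [irr _]]]].
by have := irr x; rewrite {2}(inj _ _ e) axy.
Qed.

Lemma wK_gt0 i : @adj _ _ G i.1 i.2 -> 0 < @wK R d G i.
Proof.
move=> a; have /andP [h _] := gam_bd wf a.
rewrite /wK mulr_gt0 ?invr_gt0 ?dist_gt0 // mulr_gt0 ?invr_gt0 ?ltr0n //.
exact: lt_le_trans alpha0 h.
Qed.

Lemma wK_ge0 i : PS allN i -> 0 <= @wK R d G i.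
Proof. by rewrite /PS => /andP [_ a]; exact: ltW (wK_gt0 a). Qed.

Lemma Kom_same (S : N -> Prop) (q phi1 phi2 : N -> R) :
  isKinvOm S q phi1 -> isKinvOm S q phi2 ->
  forall v, K allN phi1 v = K allN phi2 v.
Proof.
move=> [[V1 Z1] h1] [[V2 Z2] h2] v.
set del := fun x => phi1 x - phi2 x.
have Vd : inVom S del.
  split; first by move=> x gx; rewrite /del V1 ?V2 // subr0.
  by move=> x nS; rewrite /del Z1 ?Z2 // subr0.
have h0 : K S del del = 0.
  rewrite /del Gen_sub -!KformE h1 // h2 // subrr //.
have hz : forall i, PS S i -> Dd 1 del i = 0.
  apply: (Gen_eq0 _ h0) => i; rewrite /PS => /andP [_ a]; exact: wK_gt0.
have hD : forall i : N * N, @adj _ _ G i.1 i.2 -> Dd 1 del i = 0.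
  move=> [x y] /= a.
  case: (pselect (S x)) => Sx.
    by apply: hz; rewrite /PS /= a andbT; apply/asboolP.
  case: (pselect (S y)) => Sy.
    have := hz (y, x); rewrite /PS /= -(adj_sym wf) a andbT /Dd /= => /(_ (asboolT Sy)).
    by rewrite !mul1r => /eqP; rewrite subr_eq0 => /eqP ->; rewrite subrr.
  by rewrite /Dd /= (proj2 Vd _ Sx) (proj2 Vd _ Sy) mulr0 subrr.
apply/eqP; rewrite -subr_eq0 -Gen_sub; apply/eqP; apply: big1 => i.
by rewrite /PS => /andP [_ a]; rewrite -/del (hD _ a) mul0r mulr0.
Qed.

Lemma cs2 (x1 x2 y1 y2 : R) :
  x1 * y1 + x2 * y2 <= Num.sqrt (x1 ^+ 2 + x2 ^+ 2) * Num.sqrt (y1 ^+ 2 + y2 ^+ 2).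
Proof.
apply: le_trans (ler_norm _) _; apply: CS_sqrt.
- by rewrite addr_ge0 ?sqr_ge0.
- by rewrite addr_ge0 ?sqr_ge0.
rewrite -subr_ge0.
have -> : (x1 ^+ 2 + x2 ^+ 2) * (y1 ^+ 2 + y2 ^+ 2) - (x1 * y1 + x2 * y2) ^+ 2
  = (x1 * y2 - x2 * y1) ^+ 2 by ring.
exact: sqr_ge0.
Qed.

Lemma local_bound n l (a : idx d n) (g phi r e : N -> R) :
  isSLODbasis l a g phi r -> inV e ->
  `|K allN phi e - M allN g e| <=
    semiV (nodesIn (G := G) (patch R l a)) r * semiV (nodesIn (G := G) (patch R l a)) e.
Proof.
move=> [P0g [_ [hKom [hRq _]]]] eV.
move: P0g hKom hRq; set S := nodesIn (G := G) (patch R l a) => P0g hKom hRq.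
have gS : forall x, ~ S x -> g x = 0.
  move=> x nS; have [c hc] := P0g; rewrite hc big1 // => b /asboolP pb.
  rewrite /ind; case hb: (inCube b (p x)); last by rewrite mulr0.
  by exfalso; apply: nS; exists b.
have phS : forall x, ~ S x -> phi x = 0 by case: hKom => [[_ h] _].
pose cond x := `[< S x \/ exists y, @adj _ _ G x y /\ S y >].
set et := fun x => if cond x then e x else 0.
have eS : forall x, S x -> et x = e x.
  by move=> x Sx; rewrite /et /cond asboolT //; left.
have eN : forall x y, @adj _ _ G x y -> S y -> et x = e x.
  by move=> x y axy Sy; rewrite /et /cond asboolT //; right; exists y.
have etV : inVtilde S et.
  split.
    by move=> x gx; rewrite /et; case: (cond x) => //; exact: eV.
  move=> x nS nA; rewrite /et /cond asboolF //.
  by case=> [//|[y [axy Sy]]]; exact: (nA y axy Sy).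
have k1 : K allN phi e = K allN phi et.
  apply: Gen_ext => -[x y]; rewrite /PS /Dd /= => /andP [_ axy] nz.
  case: (pselect (S x)) => Sx.
    by rewrite (eS _ Sx) (eN y x) // (adj_sym wf).
  case: (pselect (S y)) => Sy.
    by rewrite (eS _ Sy) (eN x y).
  by move: nz; rewrite (phS _ Sx) (phS _ Sy) mulr0 subrr eqxx.
have m1 : M allN g e = M allN g et.
  apply: Gen_ext => -[x y]; rewrite /PS /Dd /= => /andP [_ axy] nz.
  case: (pselect (S x)) => Sx; first by rewrite (eS _ Sx) !mul0r.
  by move: nz; rewrite (gS _ Sx) mul0r subrr eqxx.
have [phi' [hK' [_ hR]]] := hRq.
have := hR et etV; rewrite LformE MformE KformE MformE (Kom_same hK' hKom) -k1 -m1 => <-.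
have eL : L S et et = L S e e.
  apply: Gen_ext2 => -[x y]; rewrite /PS /Dd /= => /andP [/asboolP Sx axy].
  by rewrite (eS _ Sx) (eN y x) // (adj_sym wf).
have eM : M S et et = M S e e.
  apply: Gen_ext2 => -[x y]; rewrite /PS /Dd /= => /andP [/asboolP Sx axy].
  by rewrite (eS _ Sx) !mul0r.
rewrite /semiV !MformE !LformE.
apply: le_trans (ler_normD _ _) _.
apply: le_trans (lerD (Gen_CS 1 (fun i _ => wL_ge0 i) r et) (Gen_CS 0 (fun i _ => wM_ge0 i) r et)) _.
rewrite eL eM.
have hLr : 0 <= L S r r by apply: Gen_ge0 => i _; exact: wL_ge0.
have hMr : 0 <= M S r r by apply: Gen_ge0 => i _; exact: wM_ge0.
have hLe : 0 <= L S e e by apply: Gen_ge0 => i _; exact: wL_ge0.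
have hMe : 0 <= M S e e by apply: Gen_ge0 => i _; exact: wM_ge0.
have := cs2 (Num.sqrt (M S r r)) (Num.sqrt (L S r r)) (Num.sqrt (M S e e)) (Num.sqrt (L S e e)).
rewrite !sqr_sqrtr // => h; apply: le_trans h.
by rewrite addrC.
Qed.

End Local.

Section Span.
Variable R : realType.
Variables T N : finType.
Variables (g ind : T -> N -> R) (co : T -> T -> R).
Hypothesis gE : forall a x, g a x = \sum_b co a b * ind b x.
Hypothesis inj : forall c : T -> R, (forall x, \sum_a c a * g a x = 0) -> forall a, c a = 0.

Definition Amx : 'M[R]_#|T| := \matrix_(i, j) co (enum_val i) (enum_val j).

Lemma sum_rank (F : 'I_#|T| -> R) : \sum_i F i = \sum_(a : T) F (enum_rank a).
Proof.
apply: (reindex enum_rank); apply: onW_bij; exists enum_val.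
  exact: enum_rankK.
exact: enum_valK.
Qed.

Lemma mulA_E (u : 'rV[R]_#|T|) b :
  (u *m Amx) 0 (enum_rank b) = \sum_a u 0 (enum_rank a) * co a b.
Proof.
rewrite !mxE sum_rank; apply: eq_bigr => a _; by rewrite mxE !enum_rankK.
Qed.

Lemma comb_E (c : T -> R) x :
  \sum_a c a * g a x = \sum_b (\sum_a c a * co a b) * ind b x.
Proof.
under eq_bigr do rewrite gE mulr_sumr.
rewrite exchange_big /=; apply: eq_bigr => b _; rewrite mulr_suml.
by apply: eq_bigr => a _; ring.
Qed.

Lemma Amx_free : row_free Amx.
Proof.
rewrite -kermx_eq0; apply/eqP/row_matrixP => i; rewrite row0.
have hk : row i (kermx Amx) *m Amx = 0 by apply/sub_kermxP; exact: row_sub.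
pose c a := row i (kermx Amx) 0 (enum_rank a).
have c0 : forall a, c a = 0.
  apply: inj => x; rewrite comb_E big1 // => b _.
  by rewrite /c -mulA_E hk mxE mul0r.
apply/rowP => j; rewrite mxE.
have := c0 (enum_val j); rewrite /c enum_valK mxE => ->; by rewrite mxE.
Qed.

Lemma span_exists (pi : T -> R) :
  exists c : T -> R, forall x, \sum_a c a * g a x = \sum_b pi b * ind b x.
Proof.
have U : Amx \in unitmx by rewrite -row_free_unit Amx_free.
pose c0 := (\row_j pi (enum_val j)) *m invmx Amx.
exists (fun a => c0 0 (enum_rank a)) => x; rewrite comb_E.
apply: eq_bigr => b _; congr (_ * _).
by rewrite -mulA_E /c0 mulmxKV // mxE enum_rankK.
Qed.

End Span.

Section Main.
Variable R : realType.
Variable d : nat.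
Variable G : network R d.
Local Notation N := (node G).
Local Notation p := (@pos R d G).
Variables alpha beta mu Cfr : R.
Hypothesis alpha0 : 0 < alpha.
Hypothesis ab : alpha <= beta.
Hypothesis mu0 : 0 < mu.
Hypothesis Cfr0 : 0 < Cfr.
Hypothesis wf : wf_network G alpha beta.
Local Notation allN := (@allN R d G).
Hypothesis fried : forall v, inV v -> semiM allN v <= Cfr * semiL allN v.
Variables n l : nat.
Hypothesis n0 : (0 < n)%N.
Hypothesis l0 : (0 < l)%N.
Hypothesis hp : poincare G mu n.
Variables g phi r : idx d n -> N -> R.
Hypothesis hbasis : forall a, isSLODbasis l a (g a) (phi a) (r a).
Variable Cr : R.
Hypothesis Cr0 : 0 < Cr.
Hypothesis hriesz : riesz g Cr.
Variables f u uH : N -> R.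
Hypothesis hu : isKinv f u.
Hypothesis huH : isSLOD phi f uH.

Local Notation M S := (Gen (PS S) (@wM R d G) 0).
Local Notation L S := (Gen (PS S) (@wL R d G) 1).
Local Notation K S := (Gen (PS S) (@wK R d G) 1).

Lemma phiV a : inV (phi a).
Proof. by case: (hbasis a) => _ [_ [[[V _] _] _]]. Qed.

Lemma spanV (c : idx d n -> R) : inV (fun x => \sum_a c a * phi a x).
Proof. by move=> x gx; rewrite big1 // => a _; rewrite (phiV a gx) mulr0. Qed.

Lemma spanning : exists c : idx d n -> R, forall x, \sum_a c a * g a x = PiH n f x.
Proof.
have /boolp.choice [co hco] : forall a, exists c : idx d n -> R,
    forall x, g a x = \sum_(b | `[< patch R l a b >]) c b * ind b x.
  by move=> a; case: (hbasis a) => h _.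
pose co' a b := if `[< patch R l a b >] then co a b else 0.
have gE : forall a x, g a x = \sum_b co' a b * ind b x.
  move=> a x; rewrite hco big_mkcond; apply: eq_bigr => b _.
  by rewrite /co'; case: ifP => _; rewrite ?mul0r.
have inj : forall c : idx d n -> R, (forall x, \sum_a c a * g a x = 0) -> forall a, c a = 0.
  move=> c hc a.
  have hs : \sum_a c a ^+ 2 = 0.
    apply/eqP; rewrite eq_le sumr_ge0 ?andbT; last by move=> i _; exact: sqr_ge0.
    have [h1 _] := andP (hriesz c).
    have e0 : semiM allN (fun x => \sum_a c a * g a x) = 0.
      rewrite /semiM /Mform big1 ?sqrtr0 // => x _.
      by rewrite big1 ?mulr0 // => y _; rewrite hc !(mulr0, mul0r).
    move: h1; rewrite e0 expr0n /= pmulr_rle0 //.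
    by rewrite invr_gt0.
  apply/eqP; rewrite -sqrf_eq0; apply/eqP.
  by apply: (psumr_eq0P (P := predT) _ hs) => // i _; exact: sqr_ge0.
have [c hc] := span_exists gE inj (pic (n := n) f).
by exists c => x; rewrite hc.
Qed.

Lemma Gen_sub2 (P : pred (N * N)) (wt : N * N -> R) s v w1 w2 :
  Gen P wt s v (fun x => w1 x - w2 x) = Gen P wt s v w1 - Gen P wt s v w2.
Proof. by rewrite Gen_sym Gen_sub Gen_sym [X in _ - X]Gen_sym. Qed.

Lemma wK_ge0' : forall i, PS allN i -> 0 <= @wK R d G i.
Proof. exact: (wK_ge0 wf alpha0). Qed.
Lemma wM_ge0' : forall i : N * N, (fun _ => true) i -> 0 <= @wM R d G i.
Proof. by move=> i _; exact: wM_ge0. Qed.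
Lemma wL_ge0' : forall i : N * N, (fun _ => true) i -> 0 <= @wL R d G i.
Proof. by move=> i _; exact: wL_ge0. Qed.

Lemma exp_mono (a b e : nat) : (a <= b)%N -> (a ^ e <= b ^ e)%N.
Proof. move=> h; elim: e => [|e IH]; first by rewrite !expn0. by rewrite !expnS; exact: leq_mul. Qed.

Lemma Gen_wscale (P : pred (N * N)) (wt : N * N -> R) s (k : R) v w :
  Gen P (fun i => k * wt i) s v w = k * Gen P wt s v w.
Proof. rewrite /Gen mulr_sumr; apply: eq_bigr => i _; by rewrite [RHS]mulrA. Qed.

Lemma main_est :
  semiL allN (fun x => u x - uH x) <=
  Num.sqrt (beta / alpha) / alpha *
  (mu * Num.sqrt ((3 ^ d)%N%:R) * (n%:R^-1 * semiM allN (fun x => f x - PiH n f x)) +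
   Num.sqrt ((3 ^ d)%N%:R) * Num.sqrt (1 + Cfr ^+ 2) *
   (Num.sqrt Cr * Num.sqrt (l%:R ^+ d) * sigma l r * semiM allN f)).
Proof.
have [c hc] := spanning.
set vs := fun x => \sum_a c a * phi a x.
set e := fun x => u x - vs x.
have eV : inV e by move=> x gx; rewrite /e /vs (proj1 hu _ gx) (spanV c gx) subrr.
have [cH hcH] := proj1 huH.
have Kzero : forall z, inSpan phi z -> K allN (fun x => u x - uH x) z = 0.
  move=> z [cz hz].
  have zV : inV z by move=> x gx; rewrite hz; exact: spanV.
  rewrite Gen_sub -!KformE (proj2 hu z zV) (proj2 huH z (ex_intro _ cz hz)) subrr //.
set a0 := fun x => u x - uH x.
set w := fun x => uH x - vs x.
have wS : inSpan phi w.
  exists (fun a => cH a - c a) => x; rewrite /w hcH /vs -sumrB.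
  by apply: eq_bigr => a _; ring.
have eE : e = fun x => a0 x + w x by apply/funext => x; rewrite /e /a0 /w; ring.
have gal : K allN a0 a0 <= K allN e e.
  have o1 : K allN a0 w = 0 by exact: Kzero.
  have o2 : K allN w a0 = 0 by rewrite Gen_sym.
  rewrite eE Gen_add (Gen_add2 _ _ _ a0 a0 w) (Gen_add2 _ _ _ w a0 w) o1 o2 addr0 add0r.
  by rewrite lerDl; apply: Gen_ge0; exact: wK_ge0'.
have piE : PiH n f = fun x => \sum_a c a * g a x by apply/funext => x; rewrite hc.
have hKu : K allN u e = M allN f e by rewrite -KformE -MformE; exact: (proj2 hu e eV).
have ident : K allN e e = M allN (fun x => f x - PiH n f x) e
    - \sum_a c a * (K allN (phi a) e - M allN (g a) e).
  rewrite {1}/e Gen_sub hKu /vs Gen_sum Gen_sub piE Gen_sum.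
  have -> : \sum_a c a * (K allN (phi a) e - M allN (g a) e)
     = \sum_a c a * K allN (phi a) e - \sum_a c a * M allN (g a) e.
    by rewrite -sumrB; apply: eq_bigr => a _; ring.
  ring.
have T1 : M allN (fun x => f x - PiH n f x) e <=
    Num.sqrt (M allN (fun x => f x - PiH n f x) (fun x => f x - PiH n f x)) *
    (mu / n%:R * Num.sqrt ((3 ^ d)%N%:R) * Num.sqrt (L allN e e)).
  have -> : M allN (fun x => f x - PiH n f x) e
      = M allN (fun x => f x - PiH n f x) (fun x => e x - PiH n e x).
    by rewrite (Gen_sub2 _ _ _ _ e (PiH n e)) (orthoPi wf n0) subr0.
  apply: le_trans (Gen_CS' 0 (fun i _ => wM_ge0 i) _ _) _.
  apply: ler_wpM2l; first exact: sqrtr_ge0.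
  have hP := Mpoinc wf n0 mu0 e hp.
  apply: (le_trans (ler_wsqrtr hP)).
  rewrite sqrtrM; last exact: sqr_ge0.
  rewrite sqrtr_sqr ger0_norm; last by rewrite divr_ge0 ?ler0n ?ltW.
  by rewrite sqrtrM ?ler0n // mulrA.
pose sig := sigma l r.
have hV : forall a, semiV (nodesIn (G := G) (patch R l a)) (r a) <= sig.
  by move=> a; exact: (le_bigmax 0 (fun a => semiV (nodesIn (G := G) (patch R l a)) (r a)) a).
have sig0 : 0 <= sig by exact: bigmax_ge_id.
pose V := fun a : idx d n => semiV (nodesIn (G := G) (patch R l a)) e.
have X : forall a, `|K allN (phi a) e - M allN (g a) e| <= sig * V a.
  move=> a; apply: le_trans (local_bound wf alpha0 (hbasis a) eV) _.
  by apply: ler_wpM2r; [exact: sqrtr_ge0 | exact: hV].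
have B1 : `|\sum_a c a * (K allN (phi a) e - M allN (g a) e)| <= sig * \sum_a `|c a| * V a.
  apply: le_trans (ler_norm_sum _ _ _) _; rewrite mulr_sumr; apply: ler_sum => a _.
  by rewrite normrM mulrCA; apply: ler_wpM2l; [exact: normr_ge0 | exact: X].
have B2 : \sum_a `|c a| * V a <= Num.sqrt (\sum_a c a ^+ 2) * Num.sqrt (\sum_a V a ^+ 2).
  have := @CS_sum_sqrt R (idx d n) predT (fun _ => 1) (fun a => `|c a|) V (fun _ _ => ler01).
  have -> : \sum_(i | predT i) 1 * (`|c i| * `|c i|) = \sum_a c a ^+ 2.
    by apply: eq_bigr => a _; rewrite mul1r -normrM ger0_norm ?sq_ge0 // expr2.
  have -> : \sum_(i | predT i) 1 * (V i * V i) = \sum_a V a ^+ 2.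
    by apply: eq_bigr => a _; rewrite mul1r expr2.
  apply: le_trans; apply: le_trans (ler_norm _); apply: ler_sum => a _; rewrite mul1r //.
have B3 : \sum_a c a ^+ 2 <= Cr * M allN f f.
  have [h1 _] := andP (hriesz c).
  move: h1; rewrite /semiM sqr_sqrtr; last first.
    by rewrite MformE; apply: Gen_ge0 => i _; exact: wM_ge0.
  rewrite MformE -piE ler_pdivrMl // => h1; apply: le_trans h1 _.
  apply: ler_wpM2l; first exact: ltW.
  rewrite (pyth wf n0 f); apply: ler_wpDl; last exact: lexx.
  by apply: Gen_ge0 => i _; exact: wM_ge0.
pose K2 : R := ((2 * l).+1 ^ d)%N%:R.
have Mfr : M allN e e <= Cfr ^+ 2 * L allN e e.
  have := fried eV; rewrite /semiM /semiL MformE LformE => h.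
  apply: sqrt_sq_le h; try exact: ltW.
  - by apply: Gen_ge0 => i _; exact: wM_ge0.
  - by apply: Gen_ge0 => i _; exact: wL_ge0.
have B4 : \sum_a V a ^+ 2 <= K2 * ((1 + Cfr ^+ 2) * L allN e e).
  have -> : \sum_a V a ^+ 2 = \sum_(a : idx d n) M (nodesIn (G := G) (patch R l a)) e e
                             + \sum_(a : idx d n) L (nodesIn (G := G) (patch R l a)) e e.
    rewrite -big_split; apply: eq_bigr => a _; rewrite /V /semiV sqr_sqrtr.
      by rewrite MformE LformE.
    apply: addr_ge0; [rewrite MformE | rewrite LformE]; apply: Gen_ge0 => i _; [exact: wM_ge0 | exact: wL_ge0].
  have cnt := count_near wf n0 (k := l) (Sa := fun a => nodesIn (G := G) (patch R l a)) (fun a x h => h).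
  have o1 : \sum_(a : idx d n) M (nodesIn (G := G) (patch R l a)) e e <= K2 * M allN e e.
    apply: Gen_overlap; first by move=> i _; exact: wM_ge0.
      by move=> a i; rewrite /PS => /andP [_ ->]; rewrite andbT; apply/asboolP.
    by move=> i _; exact: cnt.
  have o2 : \sum_(a : idx d n) L (nodesIn (G := G) (patch R l a)) e e <= K2 * L allN e e.
    apply: Gen_overlap; first by move=> i _; exact: wL_ge0.
      by move=> a i; rewrite /PS => /andP [_ ->]; rewrite andbT; apply/asboolP.
    by move=> i _; exact: cnt.
  apply: le_trans (lerD o1 o2) _.
  rewrite -mulrDr ler_wpM2l ?ler0n // mulrDl mul1r addrC lerD2l //.
have tge : 0 <= L allN e e by apply: Gen_ge0 => i _; exact: wL_ge0.
pose t := Num.sqrt (L allN e e).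
have t0 : 0 <= t by exact: sqrtr_ge0.
pose s1 := Num.sqrt (1 + Cfr ^+ 2).
pose sK2 := Num.sqrt K2.
have hB : `|\sum_a c a * (K allN (phi a) e - M allN (g a) e)| <=
    sig * (Num.sqrt Cr * Num.sqrt (M allN f f)) * (sK2 * (s1 * t)).
  apply: le_trans B1 _; rewrite -mulrA; apply: ler_wpM2l; first exact: sig0.
  apply: le_trans B2 _; apply: ler_pM; try exact: sqrtr_ge0.
    rewrite -sqrtrM; [exact: ler_wsqrtr B3 | exact: ltW].
  rewrite /sK2 /s1 /t -!sqrtrM ?ler0n ?addr_ge0 ?ler01 ?sqr_ge0 //; exact: ler_wsqrtr B4.
have h3 := ler_norm (- (\sum_a c a * (K allN (phi a) e - M allN (g a) e))).
rewrite normrN in h3.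
set Bs := \sum_a c a * (K allN (phi a) e - M allN (g a) e) in ident hB h3.
set sMfP := Num.sqrt (M allN (fun x => f x - PiH n f x) (fun x => f x - PiH n f x)) in T1.
set s3 := Num.sqrt ((3 ^ d)%N%:R : R) in T1 *.
pose Q := sMfP * (mu / n%:R * s3) + sig * (Num.sqrt Cr * Num.sqrt (M allN f f)) * (sK2 * s1).
have Kee : K allN e e <= Q * t.
  have -> : Q * t = sMfP * (mu / n%:R * s3 * t) + sig * (Num.sqrt Cr * Num.sqrt (M allN f f)) * (sK2 * (s1 * t)).
    by rewrite /Q; ring.
  rewrite ident; rewrite -/t in T1; lra.
have aL : alpha * L allN e e <= K allN e e.
  apply: (@Gen_mono R N (PS allN) (@wL R d G) (@wK R d G) 1 alpha e) => i; rewrite /PS => /andP [_ a]; exact: (@wK_lo R d G alpha beta wf i a).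
have Q0 : 0 <= Q.
  apply: addr_ge0.
    apply: mulr_ge0; first exact: sqrtr_ge0.
    apply: mulr_ge0; last exact: sqrtr_ge0.
    by apply: divr_ge0; [exact: ltW | exact: ler0n].
  apply: mulr_ge0; last by apply: mulr_ge0; exact: sqrtr_ge0.
  by apply: mulr_ge0; [exact: sig0 | apply: mulr_ge0; exact: sqrtr_ge0].
have tq : t <= Q / alpha.
  rewrite ler_pdivlMr //.
  have [t0'|tpos] := eqVneq t 0; first by rewrite t0' mul0r.
  have tp : 0 < t by rewrite lt_def tpos t0.
  rewrite -(ler_pM2r tp) [t * alpha]mulrC -mulrA.
  have -> : t * t = L allN e e by rewrite /t -expr2 sqr_sqrtr.
  exact: le_trans aL Kee.
have La0 : L allN a0 a0 <= beta / alpha * L allN e e.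
  have h1 : alpha * L allN a0 a0 <= K allN a0 a0.
    apply: (@Gen_mono R N (PS allN) (@wL R d G) (@wK R d G) 1 alpha a0) => i.
    rewrite /PS => /andP [_ a]; exact: (@wK_lo R d G alpha beta wf i a).
  have h2 : K allN e e <= beta * L allN e e.
    have := @Gen_mono R N (PS allN) (@wK R d G) (fun i => beta * @wL R d G i) 1 1 e.
    rewrite mul1r Gen_wscale; apply => i; rewrite /PS => /andP [_ a]; rewrite mul1r.
    exact: (@wK_hi R d G alpha beta wf i a).
  have -> : beta / alpha * L allN e e = alpha^-1 * (beta * L allN e e) by ring.
  rewrite ler_pdivlMl //; exact: le_trans h1 (le_trans gal h2).
have sK2le : sK2 <= s3 * Num.sqrt (l%:R ^+ d).
  rewrite /sK2 /s3 -sqrtrM ?ler0n //; apply: ler_wsqrtr.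
  rewrite /K2 -natrX -natrM ler_nat -expnMn; apply: exp_mono; by rewrite ltn_pmul2r.
rewrite /semiL LformE.
apply: le_trans (ler_wsqrtr La0) _.
rewrite sqrtrM; last by apply: divr_ge0; apply: ltW => //; exact: lt_le_trans ab.
rewrite /semiM !MformE -/sMfP.
apply: (le_trans (ler_wpM2l (sqrtr_ge0 _) tq)).
have -> : Num.sqrt (beta / alpha) * (Q / alpha) = Num.sqrt (beta / alpha) / alpha * Q by ring.
apply: ler_wpM2l; first by apply: divr_ge0; [exact: sqrtr_ge0 | exact: ltW].
have h4 : sig * (Num.sqrt Cr * Num.sqrt (M allN f f)) * (sK2 * s1)
    <= sig * (Num.sqrt Cr * Num.sqrt (M allN f f)) * (s3 * Num.sqrt (l%:R ^+ d) * s1).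
  apply: ler_wpM2l.
    by apply: mulr_ge0; [exact: sig0 | apply: mulr_ge0; exact: sqrtr_ge0].
  by apply: ler_wpM2r; [exact: sqrtr_ge0 | exact: sK2le].
have E1 : sMfP * (mu / n%:R * s3) = mu * s3 * (n%:R^-1 * sMfP) by ring.
have E2 : sig * (Num.sqrt Cr * Num.sqrt (M allN f f)) * (s3 * Num.sqrt (l%:R ^+ d) * s1)
   = s3 * s1 * (Num.sqrt Cr * Num.sqrt (l%:R ^+ d) * sig * Num.sqrt (M allN f f)) by rewrite /s1; ring.
rewrite /Q -/sig -/s1; lra.
Qed.

Lemma second_est (C0 rest : R) : 0 <= C0 -> 0 <= rest ->
  C0 * (n%:R^-1 * semiM allN (fun x => f x - PiH n f x) + rest) <=
  C0 * (1 + mu * Num.sqrt ((3 ^ d)%N%:R)) * (n%:R^-1 ^+ 2 * semiL allN f + rest).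
Proof.
move=> C00 r0.
set s3 := Num.sqrt ((3 ^ d)%N%:R : R).
have s30 : 0 <= s3 by exact: sqrtr_ge0.
have b0 : 0 <= semiL allN f by exact: sqrtr_ge0.
have H0 : 0 <= n%:R^-1 :> R by rewrite invr_ge0 ler0n.
have hP : semiM allN (fun x => f x - PiH n f x) <= mu * n%:R^-1 * s3 * semiL allN f.
  rewrite /semiM /semiL MformE LformE.
  apply: le_trans (ler_wsqrtr (Mpoinc wf n0 mu0 f hp)) _.
  rewrite sqrtrM; last exact: sqr_ge0.
  rewrite sqrtr_sqr ger0_norm; last by apply: divr_ge0; [exact: ltW | exact: ler0n].
  by rewrite sqrtrM ?ler0n // mulrA.
rewrite -mulrA; apply: ler_wpM2l => //.
have h1 : n%:R^-1 * semiM allN (fun x => f x - PiH n f x) <= n%:R^-1 * (mu * n%:R^-1 * s3 * semiL allN f).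
  by apply: ler_wpM2l.
have h2 : 0 <= n%:R^-1 ^+ 2 * semiL allN f by rewrite mulr_ge0 ?exprn_ge0.
have h3 : 0 <= mu * s3 * rest by rewrite !mulr_ge0 // ltW.
have E : n%:R^-1 * (mu * n%:R^-1 * s3 * semiL allN f) = mu * s3 * (n%:R^-1 ^+ 2 * semiL allN f) by ring.
rewrite E in h1.
have E2 : (1 + mu * s3) * (n%:R^-1 ^+ 2 * semiL allN f + rest)
   = mu * s3 * (n%:R^-1 ^+ 2 * semiL allN f) + rest + (n%:R^-1 ^+ 2 * semiL allN f + mu * s3 * rest) by ring.
rewrite E2; lra.
Qed.

End Main.

Unset Implicit Arguments.

Theorem mainTheorem9 (R : realType) (d : nat) (alpha beta mu Cfr : R) :
  0 < alpha -> alpha <= beta -> 0 < mu -> 0 < Cfr ->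
  exists C C' : R, 0 < C /\ 0 < C' /\
  forall (G : network R d) (hs : seq nat),
    wf_network G alpha beta ->
    (forall v, inV v -> semiM (@allN _ _ G) v <= Cfr * semiL (@allN _ _ G) v) ->
    (forall n, n \in hs -> (0 < n)%N) ->
    (forall n, n \in hs -> netConn G n) ->
    (forall n, n \in hs -> poincare G mu n) ->
    forall (n l : nat), n \in hs -> (0 < l)%N ->
    forall g phi r : idx d n -> node G -> R,
      (forall a, isSLODbasis l a (g a) (phi a) (r a)) ->
    forall Cr : R, 0 < Cr -> riesz g Cr ->
    forall f u uH : node G -> R,
      isKinv f u -> isSLOD phi f uH ->
      let H := n%:R^-1 : R in
      let rest := Num.sqrt Cr * Num.sqrt (l%:R ^+ d) * sigma l r
                  * semiM (@allN _ _ G) f in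
      semiL (@allN _ _ G) (fun x => u x - uH x)
        <= C * (H * semiM (@allN _ _ G) (fun x => f x - PiH n f x) + rest)
      /\ C * (H * semiM (@allN _ _ G) (fun x => f x - PiH n f x) + rest)
        <= C' * (H ^+ 2 * semiL (@allN _ _ G) f + rest).
Proof.
move=> a0 ab mu0 Cfr0.
set s3 := Num.sqrt ((3 ^ d)%N%:R : R).
set s1 := Num.sqrt (1 + Cfr ^+ 2).
pose C := Num.sqrt (beta / alpha) / alpha * (s3 * (mu + s1)).
have s3p : 0 < s3 by rewrite sqrtr_gt0 ltr0n expn_gt0.
have s1p : 0 <= s1 by exact: sqrtr_ge0.
have bap : 0 < beta / alpha by rewrite divr_gt0 // (lt_le_trans a0 ab).
have Cp : 0 < C.
  apply: mulr_gt0; first by apply: divr_gt0; [rewrite sqrtr_gt0 | exact: a0].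
  apply: mulr_gt0 => //.
  by apply: lt_le_trans mu0 _; rewrite lerDl.
exists C, (C * (1 + mu * s3)).
split; first exact: Cp.
split; first by apply: mulr_gt0 => //; rewrite ltr_pwDl // ?ltr01 // mulr_ge0 // ltW.
move=> G hs wf fried hpos hnet hpo n l hn l0 g phi r hb Cr Cr0 hr f u uH hu huH H rest.
have n0 := hpos n hn.
have hp := hpo n hn.
have sig0 : 0 <= sigma l r by exact: bigmax_ge_id.
have rest0 : 0 <= rest.
  apply: mulr_ge0; last exact: sqrtr_ge0.
  apply: mulr_ge0; last exact: sig0.
  by apply: mulr_ge0; exact: sqrtr_ge0.
have X0 : 0 <= H * semiM (@allN _ _ G) (fun x => f x - PiH n f x).
  by apply: mulr_ge0; [rewrite /H invr_ge0 ler0n | exact: sqrtr_ge0].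
split.
  apply: le_trans (main_est a0 ab mu0 Cfr0 wf fried n0 l0 hp hb Cr0 hr hu huH) _.
  rewrite -/s3 -/s1 -/H -/rest /C -!mulrA.
  apply: ler_wpM2l; first exact: sqrtr_ge0.
  apply: ler_wpM2l; first by rewrite invr_ge0 ltW.
  set X := H * _.
  have h1 : 0 <= s3 * (mu * rest).
    by apply: mulr_ge0; [exact: ltW | apply: mulr_ge0; [exact: ltW | exact: rest0]].
  have h2 : 0 <= s3 * (s1 * X).
    by apply: mulr_ge0; [exact: ltW | apply: mulr_ge0; [exact: s1p | exact: X0]].
  have E : s3 * ((mu + s1) * (X + rest)) = mu * (s3 * X) + s3 * (s1 * rest)
        + s3 * (mu * rest) + s3 * (s1 * X) by ring.
  rewrite E; lra.
exact: (second_est mu0 wf n0 hp f (ltW Cp) rest0).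
Qed.
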